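(* Let $q\ge 2$ be an even integer, $m\ge 4$ an integer, $\pi$ a permutation of $\{0,1,\dots,m-3\}$, and $c\in\mathbb Z_q$. For $d\in\{0,1\}$ define the Boolean functions $\zeta^d,\eta^d$ in the variables $x_0,\dots,x_{m-3}$ (values in $\mathbb Z_2$) by $$\zeta^d=\sum_{\alpha=0}^{m-4}x_{\pi(\alpha)}x_{\pi(\alpha+1)}+d\,x_{\pi(m-3)},\qquad \eta^d=\sum_{\alpha=0}^{m-4}\bar x_{\pi(\alpha)}\bar x_{\pi(\alpha+1)}+\bar d\,\bar x_{\pi(m-3)}+d,$$ and the generalized Boolean function $g^d:\mathbb Z_2^m\to\mathbb Z_q$ by $$g^d=\frac q2\Big[\bar x_{m-1}x_{m-2}\,\zeta^d+x_{m-1}\bar x_{m-2}\,\eta^d+\bar d\,x_{m-1}x_{m-2}\Big]+c .$$ Then $(\mathbf a,\mathbf b)=\big(\Psi_{2^{m-2}-1}(g^0),\Psi_{2^{m-2}-1}(g^1)\big)$ is a $(2^{m-1}+2,\;2^{\pi(m-3)}+1)$-CZCP.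
   Context: $\omega=e^{2\pi\sqrt{-1}/q}$. For $x\in\{0,1\}$, $\bar x=1-x$. For an integer $0\le i<2^m$, $\mathbf r_i=(r_{i,0},\dots,r_{i,m-1})$ is its binary representation, $i=\sum_j r_{i,j}2^j$. For a function $f:\mathbb Z_2^m\to\mathbb Z_q$, $\Psi(f)$ is the length-$2^m$ complex sequence $(\omega^{f(\mathbf r_0)},\omega^{f(\mathbf r_1)},\dots,\omega^{f(\mathbf r_{2^m-1})})$, and for $0\le L<2^{m-1}$ the truncated sequence $\Psi_L(f)$ is obtained from $\Psi(f)$ by deleting its first $L$ and its last $L$ entries (so it has length $2^m-2L$). Aperiodic correlation: for complex sequences $\mathbf a,\mathbf b$ of length $N$, $\rho_{\mathbf a,\mathbf b}(\tau)=\sum_{k=0}^{N-1-\tau}a_k\overline{b_{k+\tau}}$ for $0\le\tau\le N-1$, $\rho_{\mathbf a,\mathbf b}(\tau)=\sum_{k=0}^{N-1+\tau}a_{k-\tau}\overline{b_k}$ for $-(N-1)\le\tau\le -1$, and $0$ for $|\tau|\ge N$; $\rho_{\mathbf a}=\rho_{\mathbf a,\mathbf a}$. CZCP: for positive integers $N,Z$ let $\mathcal T_1=\{1,\dots,Z\}$ and $\mathcal T_2=\{N-Z,\dots,N-1\}$. A pair $(\mathbf a,\mathbf b)$ of length-$N$ sequences is an $(N,Z)$-CZCP (cross Z-complementary pair) if (C1) $\rho_{\mathbf a}(\tau)+\rho_{\mathbf b}(\tau)=0$ for all $\tau$ with $|\tau|\in\mathcal T_1\cup\mathcal T_2$, and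 (C2) $\rho_{\mathbf a,\mathbf b}(\tau)+\rho_{\mathbf b,\mathbf a}(\tau)=0$ for all $\tau$ with $|\tau|\in\mathcal T_2$. *)

(* Defs.v *)
From HB Require Import structures.
From mathcomp Require Import all_boot all_order all_algebra all_fingroup all_field.
Set Implicit Arguments. Unset Strict Implicit. Unset Printing Implicit Defensive.
Import Order.TTheory GRing.Theory Num.Theory.
Local Open Scope ring_scope.

(* omega = e^{2 pi i / q} for even q: the (q/2)-th root of -1 with minimal
   non-negative argument, i.e. e^{i pi/(q/2)} (see numfield.v header). *)
Definition omega (q : nat) : algC := (q./2).-root (-1).

Definition bit (k j : nat) : bool := odd (k %/ 2 ^ j).

(* A generalized Boolean function Z_2^m -> Z_q is represented as a function
   from bit vectors (nat -> bool, x_j = j-th variable) to nat, read modulo q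
   (omega ^+ q = 1, so only the residue matters). *)
Definition Psi (q : nat) (f : (nat -> bool) -> nat) (k : nat) : algC :=
  omega q ^+ f (bit k).

(* Truncated sequence Psi_L(f): entry k is entry k+L of Psi(f),
   for 0 <= k < 2^m - 2L. *)
Definition PsiL (q L : nat) (f : (nat -> bool) -> nat) (k : nat) : algC :=
  Psi q f (k + L).

Definition rho (N : nat) (a b : nat -> algC) (tau : int) : algC :=
  match tau with
  | Posz t => \sum_(k < N - t) a k * (b (k + t)%N)^*
  | Negz t => \sum_(k < N - t.+1) a (k + t.+1)%N * (b k)^*
  end.

Definition CZCP (N Z : nat) (a b : nat -> algC) : Prop :=
  (forall tau : int,
      ((1 <= `|tau| <= Z)%N || (N - Z <= `|tau| <= N - 1)%N) ->
      rho N a a tau + rho N b b tau = 0) /\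
  (forall tau : int, (N - Z <= `|tau| <= N - 1)%N ->
      rho N a b tau + rho N b a tau = 0).

Definition permf (n : nat) (pi : 'S_n) (a : nat) : nat :=
  match insub a with Some i => nat_of_ord (pi i) | None => a end.

Definition zeta (m : nat) (pi : 'S_(m - 2)) (d : bool) (x : nat -> bool) : nat :=
  ((\sum_(0 <= a < m - 3) x (permf pi a) * x (permf pi a.+1))
   + d * x (permf pi (m - 3)))%N.

Definition eta (m : nat) (pi : 'S_(m - 2)) (d : bool) (x : nat -> bool) : nat :=
  ((\sum_(0 <= a < m - 3) (~~ x (permf pi a)) * (~~ x (permf pi a.+1)))
   + (~~ d) * (~~ x (permf pi (m - 3))) + d)%N.

Definition gfun (q m : nat) (pi : 'S_(m - 2)) (c : nat) (d : bool)
    (x : nat -> bool) : nat :=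
  (q./2 * ((~~ x (m - 1)%N) * x (m - 2)%N * zeta pi d x
           + x (m - 1)%N * (~~ x (m - 2)%N) * eta pi d x
           + (~~ d) * x (m - 1)%N * x (m - 2)%N) + c)%N.

(* Main.v *)
Require Import Defs.
From HB Require Import structures.
From mathcomp Require Import all_boot all_order all_algebra all_fingroup all_field.
From mathcomp Require Import zify ring.
Import Order.TTheory GRing.Theory Num.Theory.

Lemma bit0n y : bit y 0 = odd y.
Proof. by rewrite /bit expn0 divn1. Qed.

Lemma bitSn y j : bit y j.+1 = bit y./2 j.
Proof. by rewrite /bit expnS divnMA -divn2. Qed.

Lemma bit_small y j : y < 2 ^ j -> bit y j = false.
Proof. by move=> h; rewrite /bit divn_small. Qed.

Lemma bit_eq n y z : y < 2 ^ n -> z < 2 ^ n ->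
  (forall j, j < n -> bit y j = bit z j) -> y = z.
Proof.
elim: n y z => [|n IH] y z.
  by rewrite expn0 !ltnS !leqn0 => /eqP-> /eqP->.
move=> hy hz hb.
rewrite -[y]odd_double_half -[z]odd_double_half.
have h0 := hb 0 isT; rewrite !bit0n in h0; rewrite h0.
congr (_ + _.*2); apply: IH.
- move: hy; rewrite -{1}[y]odd_double_half expnS -!muln2; case: (odd y) => /=; lia.
- move: hz; rewrite -{1}[z]odd_double_half expnS -!muln2; case: (odd z) => /=; lia.
by move=> j hj; rewrite -!bitSn; apply: hb.
Qed.

Lemma bit_mulD n h y j : y < 2 ^ n ->
  bit (h * 2 ^ n + y) j = if j < n then bit y j else bit h (j - n).
Proof.
move=> hy; case: ltnP => hj.
  rewrite /bit -(subnK (ltnW hj)) expnD mulnA divnMDl ?expn_gt0 //.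
  rewrite oddD oddM oddX /=.
  by rewrite subn_eq0 leqNgt hj /= andbF.
rewrite /bit; have -> : j = (j - n) + n by rewrite subnK.
rewrite addnK expnD (mulnC (2 ^ (j - n))) divnMA divnMDl ?expn_gt0 //.
by rewrite (divn_small hy) addn0.
Qed.

Definition flip (y u : nat) := if bit y u then y - 2 ^ u else y + 2 ^ u.

Lemma flip_decomp y u : flip y u =
  (if bit y u then (y %/ 2 ^ u).-1 else (y %/ 2 ^ u).+1) * 2 ^ u + y %% 2 ^ u.
Proof.
rewrite /flip /bit.
set Q := y %/ 2 ^ u; set r := y %% 2 ^ u.
have hy : y = Q * 2 ^ u + r := divn_eq y (2 ^ u).
set P := 2 ^ u.
case hQ: (odd Q).
  have Q1 : 0 < Q by case: (Q) hQ.
  have hP : P <= Q * P by rewrite leq_pmull.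
  rewrite -subn1 mulnBl mul1n; lia.
rewrite mulSn; lia.
Qed.

Lemma flipQ_prop Q :
  odd (if odd Q then Q.-1 else Q.+1) = ~~ odd Q /\ (if odd Q then Q.-1 else Q.+1)./2 = Q./2.
Proof.
have := odd_double_half Q; set h := Q./2; case: (odd Q) => /= EQ; rewrite -EQ.
  by rewrite add1n /= odd_double half_double.
by rewrite add0n /= odd_double uphalf_double.
Qed.

Lemma bit_flip y u j : bit (flip y u) j = bit y j (+) (j == u).
Proof.
have hr : y %% 2 ^ u < 2 ^ u by rewrite ltn_pmod ?expn_gt0.
rewrite flip_decomp [in RHS](divn_eq y (2 ^ u)) !bit_mulD //.
have -> : bit y u = odd (y %/ 2 ^ u) by [].
case: ltnP => hj.
  by rewrite (ltn_eqF hj) addbF.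
have [Ho Hh] := flipQ_prop (y %/ 2 ^ u).
case E: (j - u) => [|k].
  have -> : j == u by lia.
  by rewrite !bit0n Ho addbT.
have -> : (j == u) = false by apply/eqP; lia.
rewrite addbF !bitSn; congr bit.
by rewrite -Hh.
Qed.

Lemma bit_ge y u : bit y u -> 2 ^ u <= y.
Proof. by case: (ltnP y (2 ^ u)) => // /bit_small ->. Qed.

Lemma flip_flip y u : flip (flip y u) u = y.
Proof.
rewrite {1}/flip bit_flip eqxx addbT /flip.
case E: (bit y u) => /=.
  by have := @bit_ge _ _ E; lia.
by lia.
Qed.

Lemma flip_add y t u : bit y u = bit (y + t) u -> flip y u + t = flip (y + t) u.
Proof.
rewrite /flip => <-; case E: (bit y u).
  by have := @bit_ge _ _ E; lia.
by lia.
Qed.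

Lemma flip_lt n y u : y < 2 ^ n -> u < n -> flip y u < 2 ^ n.
Proof.
move=> hy hu; rewrite /flip; case E: (bit y u); first by lia.
have hr : y %% 2 ^ u < 2 ^ u by rewrite ltn_pmod ?expn_gt0.
set Q := y %/ 2 ^ u.
have hyQ : y = Q * 2 ^ u + y %% 2 ^ u := divn_eq y (2 ^ u).
have hK : 2 ^ n = 2 ^ (n - u) * 2 ^ u by rewrite -expnD subnK // ltnW.
have hQ : Q < 2 ^ (n - u) by rewrite ltn_divLR ?expn_gt0 // -hK.
have hQ1 : Q.+1 != 2 ^ (n - u).
  apply/negP => /eqP hE.
  have : odd (2 ^ (n - u)) by rewrite -hE /= -/(bit y u) E.
  by rewrite oddX subn_eq0 leqNgt hu.
have hQ2 : Q.+2 <= 2 ^ (n - u) by rewrite ltn_neqAle hQ1 hQ.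
have := leq_mul hQ2 (leqnn (2 ^ u)).
rewrite -hK mulSn; lia.
Qed.

Local Open Scope ring_scope.
Notation sg n := ((-1 : algC) ^+ n).

Definition Pp (s : nat -> nat) (n1 : nat) (x : nat -> bool) : nat :=
  (\sum_(0 <= a < n1) x (s a) * x (s a.+1))%N.
Definition zet (s : nat -> nat) n1 (d : bool) (x : nat -> bool) : nat :=
  (Pp s n1 x + d * x (s n1))%N.

Lemma sg_sum (r : seq nat) (P : pred nat) (F : nat -> nat) :
  sg (\sum_(i <- r | P i) F i)%N = \prod_(i <- r | P i) sg (F i).
Proof. exact: (big_morph (fun n => sg n) (fun a b => exprD _ a b) (expr0 _)). Qed.

Lemma sg_xor_and (b c e f : bool) : ~~ (e && f) ->
  sg ((b (+) e) * (c (+) f))%N = sg (b && c) * sg (b && f) * sg (e && c).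
Proof.
case: e; case: f => // _; case: b; case: c;
  by rewrite /= ?mul0n ?muln0 ?muln1 ?expr0 ?expr1 ?mulr1 ?mul1r ?mulrNN ?mulN1r ?mulrN1 ?opprK ?mulr1.
Qed.

Lemma path_flip s n1 x w :
  (forall a b, (a <= n1)%N -> (b <= n1)%N -> (s a == s b) = (a == b)) ->
  (0 < w <= n1)%N ->
  sg (Pp s n1 (fun j => x j (+) (j == s w))) =
  sg (Pp s n1 x) * sg (x (s w.-1)) * sg ((w < n1)%N && x (s w.+1)).
Proof.
move=> hinj hw.
rewrite /Pp !sg_sum.
rewrite (eq_big_nat _ _ (F2 := fun a => sg (x (s a) && x (s a.+1)) *
   sg (x (s a) && (a.+1 == w)) * sg ((a == w) && x (s a.+1)))); last first.
  move=> a ha; rewrite (hinj a w) ?(hinj a.+1 w); try lia.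
  by apply: sg_xor_and; apply/negP => /andP [/eqP h1 /eqP h2]; lia.
rewrite big_split /= big_split /=; congr (_ * _ * _).
  by apply: eq_bigr => a _; rewrite mulnb.
  rewrite (eq_bigr (fun a => if a == w.-1 then sg (x (s a)) else 1)); last first.
    by move=> a _; case: (a =P w.-1) => h1; case: (a.+1 =P w) => h2 /=; rewrite ?andbT ?andbF ?h1 //; lia.
  rewrite -big_mkcond big_nat1_eq.
  by have -> : (0 <= w.-1 < n1)%N by lia.
rewrite (eq_bigr (fun a => if a == w then sg (x (s a.+1)) else 1)); last first.
  by move=> a _; case: eqP.
rewrite -big_mkcond big_nat1_eq /=.
by case: (w < n1)%N.
Qed.

Lemma inv_sum (n : nat) (F : nat -> algC) (io : nat -> nat) :
  (forall k, (k < n)%N -> (io k < n)%N) ->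
  (forall k, (k < n)%N -> io (io k) = k) ->
  (forall k, (k < n)%N -> F (io k) = - F k) ->
  \sum_(k < n) F k = 0.
Proof.
move=> hlt hinv hF.
pose h (k : 'I_n) : 'I_n := Ordinal (hlt k (ltn_ord k)).
have hinj : injective h.
  move=> a b /(congr1 val) /= E; apply: ord_inj.
  by rewrite -(hinv a) ?ltn_ord // E hinv.
have E := reindex_inj hinj (P := xpredT) (F := fun k : 'I_n => F k).
have H : \sum_(k < n) F k = - \sum_(k < n) F k.
  rewrite {1}E -sumrN; apply: eq_bigr => k _; exact: hF.
have := H; set S := \sum_(k < n) F k => H2.
have : S *+ 2 == 0 by rewrite mulr2n {1}H2 addNr.
by rewrite mulrn_eq0 /= => /eqP.
Qed.

Fixpoint lastd (P : nat -> bool) (k : nat) : nat :=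
  match k with 0 => 0 | k'.+1 => if P k' then k' else lastd P k' end.

Lemma lastdP (P : nat -> bool) k a : (a < k)%N -> P a ->
  [/\ P (lastd P k), (lastd P k < k)%N & forall b, (b < k)%N -> P b -> (b <= lastd P k)%N].
Proof.
elim: k a => [//|k IH] a ha hP /=.
case E: (P k).
  by split => // b hb _; rewrite -ltnS.
have hak : a != k by apply/eqP => ak; rewrite ak E in hP.
have ha' : (a < k)%N by rewrite ltn_neqAle hak -ltnS.
have [H1 H2 H3] := IH a ha' hP.
split => //; first by apply: ltnW.
move=> b hb hPb; apply: H3 => //.
rewrite ltn_neqAle -ltnS hb andbT; apply/eqP => bk; by rewrite bk E in hPb.
Qed.

Lemma lastd_ext (P Q : nat -> bool) k : (forall a, (a < k)%N -> P a = Q a) ->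
  lastd P k = lastd Q k.
Proof.
elim: k => [//|k IH] H /=.
by rewrite H // IH // => a ha; apply: H; apply: ltnW.
Qed.

Lemma Pp_ext s n1 x x' : (forall j, x j = x' j) -> Pp s n1 x = Pp s n1 x'.
Proof. by move=> H; rewrite /Pp; apply: eq_bigr => a _; rewrite !H. Qed.

Lemma F_form s n1 x x' :
  sg (zet s n1 false x) * sg (zet s n1 false x') + sg (zet s n1 true x) * sg (zet s n1 true x')
  = sg (Pp s n1 x) * sg (Pp s n1 x') * (1 + sg (x (s n1)) * sg (x' (s n1))).
Proof.
rewrite /zet !exprD !mul0n !expr0 !mulr1.
ring.
Qed.

Lemma xor_neq (b c e : bool) : (b (+) e != c (+) e) = (b != c).
Proof. by case: b; case: c; case: e. Qed.

Lemma xor_eq (b c e : bool) : (b (+) e == c (+) e) = (b == c).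
Proof. by case: b; case: c; case: e. Qed.

Lemma sg_sq (b : bool) : sg b * sg b = 1.
Proof. by case: b; rewrite ?expr0 ?expr1 ?mulr1 ?mulrNN ?mulr1. Qed.

Lemma sg_neq (b c : bool) : b != c -> sg b * sg c = -1.
Proof. by case: b; case: c => //= _; rewrite ?expr0 ?expr1 ?mulr1 ?mul1r. Qed.

Lemma golay n1 (s : nat -> nat) t :
  (forall a, (a <= n1)%N -> (s a <= n1)%N) ->
  (forall a b, (a <= n1)%N -> (b <= n1)%N -> (s a == s b) = (a == b)) ->
  (forall j, (j <= n1)%N -> exists2 a, (a <= n1)%N & s a = j) ->
  (0 < t < 2 ^ n1.+1)%N ->
  \sum_(y < 2 ^ n1.+1 - t) (sg (zet s n1 false (bit y)) * sg (zet s n1 false (bit (y + t)))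
       + sg (zet s n1 true (bit y)) * sg (zet s n1 true (bit (y + t)))) = 0.
Proof.
move=> hrng hinj hsurj ht.
set N := (2 ^ n1.+1)%N.
pose D y a := bit y (s a) != bit (y + t) (s a).
pose v y := lastd (D y) n1.+1.
pose E y := bit y (s n1) == bit (y + t) (s n1).
pose io y := if E y then flip y (s (v y).+1) else y.
have key : forall y, (y + t < N)%N -> E y ->
   [/\ D y (v y), (v y < n1)%N & forall b, (b <= n1)%N -> D y b -> (b <= v y)%N].
  move=> y hy hE.
  have : ~~ [forall j : 'I_n1.+1, bit y j == bit (y + t) j].
    apply/negP => /forallP H.
    have := @bit_eq n1.+1 y (y + t) (leq_ltn_trans (leq_addr t y) hy) hy
       (fun j hj => eqP (H (Ordinal hj))).
    lia.
  move/forallPn => [j hj].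
  have [a ha haj] := hsurj j (ltn_ord j).
  have hDa : D y a by rewrite /D haj.
  have [H1 H2 H3] := @lastdP (D y) n1.+1 a ha hDa.
  split => //.
    rewrite ltn_neqAle -ltnS H2 andbT; apply/eqP => hv.
    by move: H1; rewrite -/(v y) hv /D; move: hE; rewrite /E => /eqP ->; rewrite eqxx.
have hbu : forall y, (y + t < N)%N -> E y ->
    bit y (s (v y).+1) = bit (y + t) (s (v y).+1).
  move=> y hy hE; have [H1 H2 H3] := key y hy hE.
  apply/eqP; apply: contraT => hne; have := H3 _ H2 hne; lia.
apply: (@inv_sum (N - t) (fun y => sg (zet s n1 false (bit y)) * sg (zet s n1 false (bit (y + t)))
       + sg (zet s n1 true (bit y)) * sg (zet s n1 true (bit (y + t)))) io).
- move=> y hy; rewrite /io; case hE: (E y) => //.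
  have hyt : (y + t < N)%N by lia.
  have [H1 H2 H3] := key y hyt hE.
  have hu : (s (v y).+1 < n1.+1)%N by apply: hrng.
  have := @flip_lt n1.+1 _ _ hyt hu; rewrite -flip_add; last exact: hbu.
  lia.
- move=> y hy; rewrite /io; case hE: (E y); last by rewrite hE.
  have hyt : (y + t < N)%N by lia.
  have hb := hbu y hyt hE.
  set u := s (v y).+1 in hb *.
  have hD : forall a, D (flip y u) a = D y a.
    by move=> a; rewrite /D flip_add // !bit_flip xor_neq.
  have hE' : E (flip y u) = E y by rewrite /E flip_add // !bit_flip xor_eq.
  rewrite hE' hE.
  have -> : v (flip y u) = v y by apply: lastd_ext => a _; apply: hD.
  by rewrite flip_flip.
move=> y hy; rewrite /io; case hE: (E y); last first.
  rewrite F_form.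
  have : bit y (s n1) != bit (y + t) (s n1) by rewrite -/(E y) hE.
  by move/sg_neq ->; rewrite addrN mulr0 oppr0.
have hyt : (y + t < N)%N by lia.
have [H1 H2 H3] := key y hyt hE.
have hb := hbu y hyt hE.
set u := s (v y).+1 in hb *.
rewrite !F_form flip_add //.
rewrite (@Pp_ext s n1 _ _ (bit_flip y u)) (@Pp_ext s n1 _ _ (bit_flip (y + t) u)).
rewrite !path_flip // /=.
rewrite !bit_flip -(eqP hE) !sg_sq.
have h2 : ((v y).+1 < n1)%N && bit y (s (v y).+2) =
          ((v y).+1 < n1)%N && bit (y + t) (s (v y).+2).
  case hlt: ((v y).+1 < n1)%N => //=.
  apply/eqP; apply: contraT => hne; have := H3 _ hlt hne; lia.
rewrite h2 /=.
have := @sg_neq _ _ H1.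
move: (sg (bit y (s (v y)))) (sg (bit (y + t) (s (v y)))) => a a' haa'.
set c := sg (_ && _).
have hc : c * c = 1 by rewrite /c sg_sq.
have -> : sg (Pp s n1 (bit y)) * a * c * (sg (Pp s n1 (bit (y + t))) * a' * c) * (1 + 1)
  = sg (Pp s n1 (bit y)) * sg (Pp s n1 (bit (y + t))) * (a * a') * (c * c) * (1 + 1) by ring.
by rewrite haa' hc; ring.
Qed.

Definition sa (A B : nat -> algC) (M k : nat) : algC :=
  if k == 0%N then 1 else if (k <= M)%N then A (k.-1)%N
  else if (k <= M + M)%N then B (M + M - k)%N else -1.
Definition sb (A B : nat -> algC) (M k : nat) : algC :=
  if k == 0%N then 1 else if (k <= M)%N then B (k.-1)%N
  else if (k <= M + M)%N then - A (M + M - k)%N else 1.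

Lemma sa0 A B M : sa A B M 0 = 1. Proof. by []. Qed.
Lemma sb0 A B M : sb A B M 0 = 1. Proof. by []. Qed.
Lemma sa1 A B M k : (0 < k <= M)%N -> sa A B M k = A (k.-1)%N.
Proof.
move=> h; have h1 : (k == 0%N) = false by lia.
have h2 : (k <= M)%N = true by lia.
by rewrite /sa h1 h2.
Qed.
Lemma sb1 A B M k : (0 < k <= M)%N -> sb A B M k = B (k.-1)%N.
Proof.
move=> h; have h1 : (k == 0%N) = false by lia.
have h2 : (k <= M)%N = true by lia.
by rewrite /sb h1 h2.
Qed.
Lemma sa2 A B M k : (M < k <= M + M)%N -> sa A B M k = B (M + M - k)%N.
Proof.
move=> h; have h1 : (k == 0%N) = false by lia.
have h2 : (k <= M)%N = false by lia.
have h3 : (k <= M + M)%N = true by lia.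
by rewrite /sa h1 h2 h3.
Qed.
Lemma sb2 A B M k : (M < k <= M + M)%N -> sb A B M k = - A (M + M - k)%N.
Proof.
move=> h; have h1 : (k == 0%N) = false by lia.
have h2 : (k <= M)%N = false by lia.
have h3 : (k <= M + M)%N = true by lia.
by rewrite /sb h1 h2 h3.
Qed.
Lemma sa3 A B M : sa A B M (M + M + 1)%N = -1.
Proof.
have h1 : (M + M + 1 == 0%N) = false by lia.
have h2 : (M + M + 1 <= M)%N = false by lia.
have h3 : (M + M + 1 <= M + M)%N = false by lia.
by rewrite /sa h1 h2 h3.
Qed.
Lemma sb3 A B M : sb A B M (M + M + 1)%N = 1.
Proof.
have h1 : (M + M + 1 == 0%N) = false by lia.
have h2 : (M + M + 1 <= M)%N = false by lia.
have h3 : (M + M + 1 <= M + M)%N = false by lia.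
by rewrite /sb h1 h2 h3.
Qed.

Lemma sum_shift a b (F : nat -> algC) :
  \sum_(a <= i < b) F i = \sum_(0 <= i < b - a) F (i + a)%N.
Proof. by rewrite -{1}[a]add0n big_addn. Qed.

Lemma concat_small (A B : nat -> algC) (M t : nat) : (0 < t < M)%N ->
  \sum_(y < M - t) (A y * A (y + t)%N + B y * B (y + t)%N) = 0 ->
  \sum_(k < M + M + 2 - t) (sa A B M k * sa A B M (k + t)%N + sb A B M k * sb A B M (k + t)%N) = 0.
Proof.
move=> ht hG.
rewrite -(big_mkord xpredT (fun k => sa A B M k * sa A B M (k + t)%N + sb A B M k * sb A B M (k + t)%N)).
have -> : (M + M + 2 - t = (M + M + 1 - t).+1)%N by lia.
rewrite (@big_cat_nat _ _ _ 1 0) /=; try lia.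
rewrite (@big_cat_nat _ _ _ (M - t).+1 1) /=; try lia.
rewrite (@big_cat_nat _ _ _ M.+1 (M - t).+1) /=; try lia.
rewrite (@big_cat_nat _ _ _ (M + M + 1 - t) M.+1) /=; try lia.
rewrite !big_nat1.
have -> : \sum_(1 <= i < (M - t).+1)
   (sa A B M i * sa A B M (i + t)%N + sb A B M i * sb A B M (i + t)%N) = 0.
  rewrite sum_shift -[RHS]hG -(big_mkord xpredT (fun y => A y * A (y + t)%N + B y * B (y + t)%N)).
  have -> : ((M - t).+1 - 1 = M - t)%N by lia.
  apply: eq_big_nat => i hi.
  rewrite !sa1 ?sb1; try lia.
  have -> : ((i + 1).-1 = i)%N by lia.
  by have -> : ((i + 1 + t).-1 = i + t)%N by lia.
have -> : \sum_(M.+1 <= i < (M + M + 1 - t)%N)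
   (sa A B M i * sa A B M (i + t)%N + sb A B M i * sb A B M (i + t)%N) = 0.
  rewrite sum_shift -[RHS]hG -(big_mkord xpredT (fun y => A y * A (y + t)%N + B y * B (y + t)%N)).
  have -> : (M + M + 1 - t - M.+1 = M - t)%N by lia.
  rewrite big_nat_rev /=; apply: eq_big_nat => i hi.
  rewrite !sa2 ?sb2; try lia.
  rewrite mulrNN addrC mulrC [B _ * _]mulrC.
  have -> : (M + M - (0 + (M - t) - i.+1 + M.+1) = i + t)%N by lia.
  by have -> : (M + M - (0 + (M - t) - i.+1 + M.+1 + t) = i)%N by lia.
have -> : \sum_((M - t).+1 <= i < M.+1)
   (sa A B M i * sa A B M (i + t)%N + sb A B M i * sb A B M (i + t)%N) = 0.
  rewrite (eq_big_nat _ _ (F2 := fun i => A (i.-1)%N * B (M + M - (i + t))%N - B (i.-1)%N * A (M + M - (i + t))%N)); last first.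
    move=> i hi; rewrite (@sa1 A B M i) ?(@sb1 A B M i) ?(@sa2 A B M (i + t)) ?(@sb2 A B M (i + t)); try lia.
    by rewrite mulrN.
  rewrite sumrB; apply/eqP; rewrite subr_eq0; apply/eqP.
  rewrite big_nat_rev /=; apply: eq_big_nat => i hi.
  rewrite mulrC; congr (_ * _); congr A || congr B; lia.
rewrite sa0 sb0 !mul1r add0n (@sa1 A B M t) ?(@sb1 A B M t); try lia.
rewrite (@sa2 A B M (M + M + 1 - t)) ?(@sb2 A B M (M + M + 1 - t)); try lia.
have -> : (M + M + 1 - t + t = M + M + 1)%N by lia.
rewrite sa3 sb3.
have -> : (M + M - (M + M + 1 - t) = t.-1)%N by lia.
rewrite !add0r; ring.
Qed.

Lemma concat_large (A B : nat -> algC) (M K t : nat) : (K <= M)%N ->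
  (forall y, (y < K)%N -> A y = B y) -> (M + M + 1 - K <= t <= M + M + 1)%N ->
  \sum_(k < (M + M + 2 - t)%N) (sa A B M k * sa A B M (k + t)%N + sb A B M k * sb A B M (k + t)%N) = 0
  /\ \sum_(k < (M + M + 2 - t)%N) (sa A B M k * sb A B M (k + t)%N + sb A B M k * sa A B M (k + t)%N) = 0.
Proof.
move=> hKM hAB ht.
have h1 : forall k, (k < M + M + 2 - t)%N -> sa A B M k = sb A B M k.
  move=> k hk; case: (posnP k) => [->|hk0] //.
  rewrite sa1 ?sb1; try lia.
  apply: hAB; lia.
have h2 : forall k, (k < M + M + 2 - t)%N -> sb A B M (k + t) = - sa A B M (k + t).
  move=> k hk; case: (ltnP (k + t) (M + M + 1)) => hkt.
    rewrite sa2 ?sb2; try lia.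
    rewrite hAB //; lia.
  have -> : (k + t = M + M + 1)%N by lia.
  by rewrite sa3 sb3 opprK.
split; apply: big1 => k _; rewrite (h2 k (ltn_ord k)) (h1 k (ltn_ord k)); ring.
Qed.

Lemma permfE m (pi : 'S_(m - 2)) a (h : (a < m - 2)%N) : permf pi a = pi (Ordinal h).
Proof. by rewrite /permf insubT. Qed.

Lemma permf_lt m (pi : 'S_(m - 2)) a : (a < m - 2)%N -> (permf pi a < m - 2)%N.
Proof. by move=> h; rewrite (@permfE m pi a h). Qed.

Lemma permf_inj m (pi : 'S_(m - 2)) a b : (a < m - 2)%N -> (b < m - 2)%N ->
  (permf pi a == permf pi b) = (a == b).
Proof.
move=> ha hb; rewrite (@permfE m pi a ha) (@permfE m pi b hb).
apply/eqP/eqP => [E|E]; last by subst b; congr (nat_of_ord (pi _)); apply: val_inj.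
by have := perm_inj (ord_inj E) => /(congr1 val).
Qed.

Lemma permf_surj m (pi : 'S_(m - 2)) j : (j < m - 2)%N ->
  exists2 a, (a < m - 2)%N & permf pi a = j.
Proof.
move=> hj; exists ((pi^-1)%g (Ordinal hj)); first exact: ltn_ord.
rewrite (@permfE m pi _ (ltn_ord _)) /=.
have E : Ordinal (ltn_ord ((pi^-1)%g (Ordinal hj))) = (pi^-1)%g (Ordinal hj) by apply: val_inj.
by rewrite E permKV.
Qed.

Lemma bit_compl n y j : (y < 2 ^ n)%N -> (j < n)%N -> bit (2 ^ n - 1 - y) j = ~~ bit y j.
Proof.
elim: n y j => [//|n IH] y j hy hj.
have hy2 : (y./2 < 2 ^ n)%N.
  move: hy; rewrite -{1}[y]odd_double_half expnS -!muln2; case: (odd y) => /=; lia.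
have e : (2 ^ n.+1 - 1 - y = (~~ odd y) + (2 ^ n - 1 - y./2).*2)%N.
  move: hy hy2; rewrite -{1 3}[y]odd_double_half expnS -!muln2.
  case: (odd y) => /=; lia.
rewrite e; case: j hj => [|j] hj.
  by rewrite !bit0n oddD odd_double addbF oddb.
by rewrite !bitSn half_bit_double IH.
Qed.

Lemma zeta_ext m (pi : 'S_(m - 2)) d x x' : (4 <= m)%N ->
  (forall j, (j < m - 2)%N -> x j = x' j) -> zeta pi d x = zeta pi d x'.
Proof.
move=> hm H; rewrite /zeta; congr (_ + _)%N.
  apply: eq_big_nat => a ha; rewrite !H //; apply: permf_lt; lia.
by rewrite H //; apply: permf_lt; lia.
Qed.

Lemma eta_ext m (pi : 'S_(m - 2)) d x x' : (4 <= m)%N ->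
  (forall j, (j < m - 2)%N -> x j = x' j) -> Defs.eta pi d x = Defs.eta pi d x'.
Proof.
move=> hm H; rewrite /Defs.eta; congr (_ + _ + _)%N.
  apply: eq_big_nat => a ha; rewrite !H //; apply: permf_lt; lia.
by rewrite H //; apply: permf_lt; lia.
Qed.

Definition Aseq m (pi : 'S_(m - 2)) (y : nat) : algC := sg (zeta pi false (bit y)).
Definition Bseq m (pi : 'S_(m - 2)) (y : nat) : algC := sg (zeta pi true (bit y)).
Arguments Aseq {m} pi y.
Arguments Bseq {m} pi y.

Lemma omega_half q : (2 <= q)%N -> omega q ^+ q./2 = -1.
Proof. by move=> hq; rewrite /omega rootCK //; case: q hq => [|[|q]]. Qed.

Lemma bits_hm m h y j : (4 <= m)%N -> (y < 2 ^ (m - 2))%N ->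
  [/\ bit (h * 2 ^ (m - 2) + y) (m - 2) = odd h,
      bit (h * 2 ^ (m - 2) + y) (m - 1) = bit h 1
    & (j < m - 2)%N -> bit (h * 2 ^ (m - 2) + y) j = bit y j].
Proof.
move=> hm hy; rewrite !bit_mulD // ltnn subnn bit0n.
have -> : (m - 1 < m - 2)%N = false by lia.
have -> : (m - 1 - (m - 2) = 1)%N by lia.
by split => // hj; rewrite hj.
Qed.

Lemma eta_false m (pi : 'S_(m - 2)) x : Defs.eta pi false x = zeta pi true (fun j => ~~ x j).
Proof. by rewrite /Defs.eta /zeta /= addn0 mul1n. Qed.

Lemma eta_true m (pi : 'S_(m - 2)) x : Defs.eta pi true x = (zeta pi false (fun j => ~~ x j)).+1.
Proof. by rewrite /Defs.eta /zeta /= !mul0n !addn0 addn1. Qed.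

Lemma entry q m (pi : 'S_(m - 2)) c d k : (2 <= q)%N -> (4 <= m)%N ->
  (k <= 2 ^ (m - 2) + 2 ^ (m - 2) + 1)%N ->
  PsiL q (2 ^ (m - 2) - 1) (gfun q pi c d) k =
  omega q ^+ c * (if d then sb (Aseq pi) (Bseq pi) (2 ^ (m - 2)) k
                  else sa (Aseq pi) (Bseq pi) (2 ^ (m - 2)) k).
Proof.
move=> hq hm hk.
rewrite /PsiL /Psi /gfun exprD exprM omega_half // mulrC; congr (_ * _).
set M := (2 ^ (m - 2))%N.
have hM : (0 < M)%N by rewrite expn_gt0.
case: (posnP k) => [->|hk0].
  have -> : (0 + (M - 1) = 0 * M + (M - 1))%N by lia.
  have [b1 b2 _] := @bits_hm m 0 (M - 1) 0 hm (ltac:(lia)).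
  by rewrite b1 b2 /= ?mul0n ?muln0 ?mul1n ?muln1 ?add0n ?addn0; case: d.
case: (leqP k M) => hkM.
  have -> : (k + (M - 1) = 1 * M + k.-1)%N by lia.
  have [b1 b2 b3] := @bits_hm m 1 (k.-1) 0 hm (ltac:(lia)).
  rewrite b1 b2 /= ?mul0n ?muln0 ?mul1n ?muln1 ?add0n ?addn0.
  rewrite (@zeta_ext m pi d _ (bit k.-1)) //; last first.
    move=> j hj; have [_ _ b3'] := @bits_hm m 1 (k.-1) j hm (ltac:(lia)); rewrite mul1n in b3'; exact: b3'.
  by case: d; rewrite ?sa1 ?sb1 //; lia.
case: (leqP k (M + M)) => hkM2.
  have -> : (k + (M - 1) = 2 * M + (k - M - 1))%N by lia.
  have [b1 b2 b3] := @bits_hm m 2 (k - M - 1) 0 hm (ltac:(lia)).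
  rewrite b1 b2 /= ?mul0n ?muln0 ?mul1n ?muln1 ?add0n ?addn0.
  have hc : forall j, (j < m - 2)%N -> ~~ bit (2 * M + (k - M - 1)) j = bit (M + M - k) j.
    move=> j hj; have [_ _ b3'] := @bits_hm m 2 (k - M - 1) j hm (ltac:(lia)).
    rewrite b3' //.
    have -> : (M + M - k = 2 ^ (m - 2) - 1 - (k - M - 1))%N by rewrite /M; lia.
    by rewrite bit_compl //; rewrite /M; lia.
  case: d.
    rewrite sb2 //; last by lia.
    rewrite eta_true exprS mulN1r (@zeta_ext m pi false _ (bit (M + M - k))) //.
  rewrite sa2 //; last by lia.
  by rewrite eta_false (@zeta_ext m pi true _ (bit (M + M - k))).
have -> : k = (M + M + 1)%N by lia.
have -> : (M + M + 1 + (M - 1) = 3 * M + 0)%N by lia.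
have [b1 b2 _] := @bits_hm m 3 0 0 hm (ltac:(lia)).
rewrite b1 b2 /=.
case: d; rewrite ?sa3 ?sb3 /= ?mul0n ?muln0 ?mul1n ?muln1 ?add0n ?addn0 //.
Qed.

Lemma rho_posz N (w : algC) (f g a b : nat -> algC) t : w * w^* = 1 ->
  (forall k, (k < N)%N -> a k = w * f k) -> (forall k, (k < N)%N -> b k = w * g k) ->
  (forall k, (g k)^* = g k) ->
  rho N a b (Posz t) = \sum_(k < N - t) f k * g (k + t)%N.
Proof.
move=> hw ha hb hg; rewrite /rho; apply: eq_bigr => k _.
have hk := ltn_ord k.
rewrite ha ?hb; try lia.
by rewrite rmorphM /= (hg (k + t)%N) mulrACA hw mul1r.
Qed.

Lemma rho_negz N (w : algC) (f g a b : nat -> algC) t : w * w^* = 1 ->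
  (forall k, (k < N)%N -> a k = w * f k) -> (forall k, (k < N)%N -> b k = w * g k) ->
  (forall k, (g k)^* = g k) ->
  rho N a b (Negz t) = \sum_(k < N - t.+1) f (k + t.+1)%N * g k.
Proof.
move=> hw ha hb hg; rewrite /rho; apply: eq_bigr => k _.
have hk := ltn_ord k.
rewrite ha ?hb; try lia.
by rewrite rmorphM /= (hg k) mulrACA hw mul1r.
Qed.

Lemma conj_sg n : (sg n)^* = sg n.
Proof. by rewrite rmorphXn rmorphN1. Qed.

Lemma conj_sa A B M k : (forall y, (A y)^* = A y) -> (forall y, (B y)^* = B y) ->
  (sa A B M k)^* = sa A B M k /\ (sb A B M k)^* = sb A B M k.
Proof.
move=> hA hB; rewrite /sa /sb.
case: ifP => _; first by rewrite rmorph1.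
case: ifP => _; first by rewrite (hA (k.-1)%N) (hB (k.-1)%N).
case: ifP => _; first by rewrite rmorphN /= (hA (M + M - k)%N) (hB (M + M - k)%N).
by rewrite rmorphN !rmorph1.
Qed.

Theorem theorem1 (q m : nat) (pi : 'S_(m - 2)) (c : nat) :
  (2 <= q)%N -> ~~ odd q -> (4 <= m)%N -> (c < q)%N ->
  CZCP (2 ^ (m - 1) + 2) (2 ^ permf pi (m - 3) + 1)
    (PsiL q (2 ^ (m - 2) - 1) (gfun q pi c false))
    (PsiL q (2 ^ (m - 2) - 1) (gfun q pi c true)).
Proof.
move=> hq hqe hm hc.
set M := (2 ^ (m - 2))%N.
set p := permf pi (m - 3).
set A := Aseq pi; set B := Bseq pi.
set w := omega q ^+ c.
have hM3 : M = (2 * 2 ^ (m - 3))%N.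
  rewrite /M; have -> : (m - 2 = (m - 3).+1)%N by lia.
  by rewrite expnS.
have hN : (2 ^ (m - 1) + 2 = M + M + 2)%N.
  rewrite hM3; have -> : (m - 1 = (m - 3).+2)%N by lia.
  by rewrite !expnS; lia.
have hp : (p < m - 2)%N by apply: permf_lt; lia.
have hK : (2 ^ p <= 2 ^ (m - 3))%N by rewrite leq_pexp2l //; lia.
have h23 : (2 <= 2 ^ (m - 3))%N.
  by have := @leq_pexp2l 2 1 (m - 3) isT; rewrite expn1 => ->; lia.
have hw : w * w^* = 1.
  have hq2 : (0 < q./2)%N.
    by move: hq; rewrite -{1}[q]odd_double_half -muln2; case: (odd q) => /=; lia.
  by rewrite -normCK /w normrX /omega norm_rootC normrN normr1 rootC1 ?expr1n.
have ha : forall k, (k < M + M + 2)%N ->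
    PsiL q (M - 1) (gfun q pi c false) k = w * sa A B M k.
  by move=> k hk; rewrite entry //; lia.
have hb : forall k, (k < M + M + 2)%N ->
    PsiL q (M - 1) (gfun q pi c true) k = w * sb A B M k.
  by move=> k hk; rewrite entry //; lia.
have hrA : forall y, (A y)^* = A y by move=> y; exact: conj_sg.
have hrB : forall y, (B y)^* = B y by move=> y; exact: conj_sg.
have hra : forall k, (sa A B M k)^* = sa A B M k by move=> k; case: (conj_sa A B M k hrA hrB).
have hrb : forall k, (sb A B M k)^* = sb A B M k by move=> k; case: (conj_sa A B M k hrA hrB).
have hMe : M = (2 ^ (m - 3).+1)%N by rewrite hM3 expnS.
have hG : forall t, (0 < t < M)%N ->
    \sum_(y < M - t) (A y * A (y + t)%N + B y * B (y + t)%N) = 0.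
  move=> t ht.
  have G := @golay (m - 3) (permf pi) t.
  rewrite hMe; apply: G.
  - move=> a0 ha0; have := @permf_lt m pi a0; lia.
  - move=> a0 b0 ha0 hb0; apply: permf_inj; lia.
  - move=> j hj; have [a0 ha0 haj] := @permf_surj m pi j (ltac:(lia)).
    by exists a0 => //; lia.
  - by rewrite -hMe.
have hAB : forall y, (y < 2 ^ p)%N -> A y = B y.
  move=> y hy; rewrite /A /B /Aseq /Bseq /zeta -/p (@bit_small y p hy).
  by rewrite !muln0.
have C1 : forall s, ((1 <= s <= 2 ^ p + 1) || (M + M + 2 - (2 ^ p + 1) <= s <= M + M + 2 - 1))%N ->
    \sum_(k < (M + M + 2 - s)%N) (sa A B M k * sa A B M (k + s)%N + sb A B M k * sb A B M (k + s)%N) = 0.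
  move=> s /orP [hs|hs].
    apply: concat_small; first lia.
    apply: hG; lia.
  by case: (@concat_large A B M (2 ^ p) s) => //; lia.
have C2 : forall s, (M + M + 2 - (2 ^ p + 1) <= s <= M + M + 2 - 1)%N ->
    \sum_(k < (M + M + 2 - s)%N) (sa A B M k * sb A B M (k + s)%N + sb A B M k * sa A B M (k + s)%N) = 0.
  by move=> s hs; case: (@concat_large A B M (2 ^ p) s) => //; lia.
rewrite hN; split.
  move=> [t|t] hcond.
    rewrite (@rho_posz _ w (sa A B M) (sa A B M) _ _ t hw ha ha hra).
    rewrite (@rho_posz _ w (sb A B M) (sb A B M) _ _ t hw hb hb hrb).
    by rewrite -big_split /=; apply: C1.
  rewrite (@rho_negz _ w (sa A B M) (sa A B M) _ _ t hw ha ha hra).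
  rewrite (@rho_negz _ w (sb A B M) (sb A B M) _ _ t hw hb hb hrb).
  rewrite -big_split /= -[RHS](C1 t.+1 hcond); apply: eq_bigr => k _.
  by rewrite mulrC [sb _ _ _ _ * _]mulrC.
move=> [t|t] hcond.
  rewrite (@rho_posz _ w (sa A B M) (sb A B M) _ _ t hw ha hb hrb).
  rewrite (@rho_posz _ w (sb A B M) (sa A B M) _ _ t hw hb ha hra).
  by rewrite -big_split /=; apply: C2.
rewrite (@rho_negz _ w (sa A B M) (sb A B M) _ _ t hw ha hb hrb).
rewrite (@rho_negz _ w (sb A B M) (sa A B M) _ _ t hw hb ha hra).
rewrite -big_split /= -[RHS](C2 t.+1 hcond); apply: eq_bigr => k _.
by rewrite addrC mulrC [sb _ _ _ _ * _]mulrC.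
Qed.
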